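(* Let $p_{1}, p_{2}, r \in \mathbb N$ and $T(p_{1},p_{2},r):=\sum_{n=1}^\infty \frac{(-1)^{n+1}H_n^{(p_{1})}H_n^{(p_{2})}}{n+r}$. Then \begin{align*} T(p_{1},p_{2},r) &=(-1)^{r}\left(S_{p_{1},p_{2},1}^{+,+,-}-S_{p_{1},p_{2}+1}^{+,-}-S_{p_{2},p_{1}+1}^{+,-}+\overline{\zeta}(p_{1}+p_{2}+1)\right)\\ &\quad +\sum_{j=1}^{r-1}(-1)^{r-1-j}\big(S(p_{1},p_{2},1,j,1)+S(p_{2},p_{1},1,j,1)\big) +\sum_{j=1}^{r-1}(-1)^{r-j}S(0,p_{1}+p_{2}+1,1,j,1)\,. \end{align*}
   Context: $H_n^{(q)}=\sum_{j=1}^n j^{-q}$ for $q\in\mathbb N$, and $H_n^{(0)}:=n$. For $q\in\{0\}\cup\mathbb N$ and $m,t,j\in\mathbb N$, $S(q,m,t,j,1):=\sum_{n=1}^\infty\frac{(-1)^{n+1}H_n^{(q)}}{n^{m}(n+j)^{t}}$. $S_{p,q}^{+,-}:=\sum_{n\ge1}(-1)^{n-1}H_n^{(p)}/n^q$, $S_{p_1,p_2,q}^{+,+,-}:=\sum_{n\ge1}(-1)^{n-1}H_n^{(p_1)}H_n^{(p_2)}/n^q$, and $\overline{\zeta}(s)=\sum_{n\ge1}(-1)^{n-1}n^{-s}$. Empty sums are $0$. *)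

(* Defs.v *)
From Stdlib Require Import Reals.
From Coquelicot Require Import Coquelicot.
Open Scope R_scope.

(* Generalized harmonic number H_n^{(q)} = sum_{j=1}^n j^{-q}.
   For q = 0 this gives n, matching the convention H_n^{(0)} := n. *)
Fixpoint harm (q n : nat) : R :=
  match n with
  | O => 0
  | S m => harm q m + / (INR (S m) ^ q)
  end.

(* Value of a series sum_{n>=1} f n, as the limit of partial sums. *)
Definition sum1 (f : nat -> R) : R := Series (fun k => f (S k)).
Definition conv1 (f : nat -> R) : Prop := ex_series (fun k => f (S k)).

Definition S5_term (q m t j : nat) (n : nat) : R :=
  (-1) ^ (n + 1) * harm q n / (INR n ^ m * INR (n + j) ^ t).
Definition Spm_term (p q : nat) (n : nat) : R :=
  (-1) ^ (n - 1) * harm p n / INR n ^ q.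
Definition Sppm_term (p1 p2 q : nat) (n : nat) : R :=
  (-1) ^ (n - 1) * harm p1 n * harm p2 n / INR n ^ q.
Definition zetabar_term (s : nat) (n : nat) : R :=
  (-1) ^ (n - 1) / INR n ^ s.
Definition T_term (p1 p2 r : nat) (n : nat) : R :=
  (-1) ^ (n + 1) * harm p1 n * harm p2 n / INR (n + r).

Definition S5 (q m t j : nat) : R := sum1 (S5_term q m t j).
Definition Spm (p q : nat) : R := sum1 (Spm_term p q).
Definition Sppm (p1 p2 q : nat) : R := sum1 (Sppm_term p1 p2 q).
Definition zetabar (s : nat) : R := sum1 (zetabar_term s).

(* finite sum over j = a..b, zero if b < a *)
Fixpoint fsum_from (a : nat) (len : nat) (g : nat -> R) : R :=
  match len with
  | O => 0
  | S l => g a + fsum_from (S a) l g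
  end.
Definition fsum (a b : nat) (g : nat -> R) : R := fsum_from a (S b - a) g.

(* Main.v *)
Require Import Defs.
From Stdlib Require Import Reals Lra Lia.
From Coquelicot Require Import Coquelicot.
Open Scope R_scope.

Lemma harm_S q n : harm q (S n) = harm q n + / INR (S n) ^ q.
Proof. reflexivity. Qed.

Lemma harm_nonneg q n : 0 <= harm q n.
Proof.
  induction n; [simpl; lra|]; rewrite !harm_S.
  assert (0 < / INR (S n) ^ q). { apply Rinv_0_lt_compat, pow_lt, lt_0_INR; lia. }
  lra.
Qed.


Lemma harm_le1 q n : (1 <= q)%nat -> harm q n <= harm 1 n.
Proof.
  intro Hq. induction n; [simpl; lra|]; rewrite !harm_S.
  assert (/ INR (S n) ^ q <= / INR (S n) ^ 1).
  { apply Rinv_le_contravar. apply pow_lt, lt_0_INR; lia.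
    apply Rle_pow; auto. rewrite S_INR. pose proof (pos_INR n). lra. }
  lra.
Qed.

Lemma harm0 n : harm 0 n = INR n.
Proof. induction n; [simpl; lra|]; rewrite !harm_S. rewrite IHn, S_INR. simpl. lra. Qed.

Lemma harm_ge1 q n : (1 <= n)%nat -> 1 <= harm q n.
Proof.
  intro Hn. induction n; [lia|]. destruct n.
  - simpl. rewrite pow1. lra.
  - rewrite harm_S. assert (0 < / INR (S (S n)) ^ q). { apply Rinv_0_lt_compat, pow_lt, lt_0_INR; lia. }
    specialize (IHn ltac:(lia)). lra.
Qed.

Lemma sqrt4 x : 0 <= x -> sqrt (sqrt x) ^ 4 = x.
Proof.
  intro. replace (sqrt (sqrt x) ^ 4) with ((sqrt (sqrt x) * sqrt (sqrt x)) * (sqrt (sqrt x) * sqrt (sqrt x))) by ring.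
  rewrite sqrt_sqrt by (apply sqrt_pos). apply sqrt_sqrt; auto.
Qed.

Lemma H_bound n : harm 1 n <= 4 * sqrt (sqrt (INR n)).
Proof.
  induction n.
  - simpl. rewrite sqrt_0, sqrt_0. lra.
  - rewrite !harm_S. 
    set (x := sqrt (sqrt (INR (S n)))). set (y := sqrt (sqrt (INR n))).
    assert (hx4 : x ^ 4 = INR (S n)) by (apply sqrt4, pos_INR).
    assert (hy4 : y ^ 4 = INR n) by (apply sqrt4, pos_INR).
    assert (hy : 0 <= y) by apply sqrt_pos.
    assert (hxy : y <= x).
    { apply sqrt_le_1_alt, sqrt_le_1_alt. rewrite S_INR; lra. }
    assert (hx1 : 1 <= x).
    { unfold x. rewrite <- sqrt_1. apply sqrt_le_1_alt. rewrite <- sqrt_1. apply sqrt_le_1_alt.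
      rewrite S_INR; pose proof (pos_INR n); lra. }
    assert (e : x^4 - y^4 = 1) by (rewrite hx4, hy4, S_INR; ring).
    assert (h1 : (x + y) * (x^2 + y^2) <= 4 * x^3).
    { assert (y^2 <= x^2) by nra.
      replace (4 * x^3) with ((2*x) * (2*x^2)) by ring.
      apply Rmult_le_compat; nra. }
    assert (h2 : 1 <= (x - y) * (4 * x^3)).
    { replace 1 with ((x - y) * ((x + y) * (x^2 + y^2))) by (rewrite <- e; ring).
      apply Rmult_le_compat_l; lra. }
    assert (h3 : 1 <= 4 * (x - y) * x ^ 4) by nra.
    rewrite pow_1, <- hx4.
    assert (0 < x^4) by (apply pow_lt; lra).
    assert (/ x^4 <= 4 * (x - y)).
    { apply (Rmult_le_reg_r (x^4)); auto. rewrite Rinv_l by lra. lra. }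
    change (sqrt (sqrt (INR n))) with y in IHn. lra.
Qed.

Lemma normR (x : R) : norm x = Rabs x.
Proof. reflexivity. Qed.

Lemma lim_inv_sqrt : is_lim_seq (fun n => / sqrt (INR n)) 0.
Proof.
  assert (H : is_lim_seq (fun n => sqrt (INR n)) p_infty).
  { apply (is_lim_comp_seq sqrt INR p_infty p_infty).
    - apply is_lim_sqrt_p. apply is_lim_id.
    - exists 0%nat. intros. discriminate.
    - apply is_lim_seq_INR. }
  apply (is_lim_seq_inv _ _ H). discriminate.
Qed.

Definition Bn (n : nat) : R := (1 + harm 1 n) ^ 2 / INR n ^ 2.

Lemma B_le n : (1 <= n)%nat -> Bn n <= 100 * (/ sqrt (INR n) - / sqrt (INR (S n))).
Proof.
  intro Hn.
  assert (hn1 : 1 <= INR n) by (apply (le_INR 1); auto).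
  set (a := sqrt (INR n)). set (b := sqrt (INR (S n))).
  assert (ha2 : a * a = INR n) by (apply sqrt_sqrt; lra).
  assert (hb2 : b * b = INR n + 1) by (unfold b; rewrite sqrt_sqrt; rewrite ?S_INR; lra).
  assert (ha1 : 1 <= a) by (unfold a; rewrite <- sqrt_1; apply sqrt_le_1_alt; lra).
  assert (hb0 : 0 <= b) by apply sqrt_pos.
  assert (hab : a < b) by nra.
  assert (hb15 : b <= 3/2 * a) by nra.
  assert (hs : sqrt (sqrt (INR n)) * sqrt (sqrt (INR n)) = a) by (apply sqrt_sqrt, sqrt_pos).
  assert (hs1 : 1 <= sqrt (sqrt (INR n))).
  { rewrite <- sqrt_1. apply sqrt_le_1_alt. rewrite <- sqrt_1. apply sqrt_le_1_alt. lra. }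
  pose proof (H_bound n) as HB. pose proof (harm_nonneg 1 n) as H0.
  assert (e1 : Bn n <= 25 / (a*a*a)).
  { unfold Bn. rewrite <- ha2.
    assert ((1 + harm 1 n)^2 <= 25 * a) by nra.
    apply (Rle_trans _ ((25 * a) / (a*a)^2)).
    - apply Rmult_le_compat_r; auto. apply Rlt_le, Rinv_0_lt_compat. nra.
    - right. field. lra. }
  assert (e2 : (b - a) * (a + b) = 1) by nra.
  assert (e3 : / a - / b = / (a * b * (a + b))).
  { replace (/ (a * b * (a + b))) with ((b - a) * (a + b) / (a * b * (a+b))) by (rewrite e2; field; nra).
    field. nra. }
  rewrite e3.
  assert (25 / (a*a*a) <= 100 * / (a * b * (a + b))).
  { replace (100 * / (a * b * (a + b))) with (25 * / (a * b * (a + b) / 4)) by (field; nra).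
    apply Rmult_le_compat_l; [lra|].
    apply Rinv_le_contravar. nra.
    assert (a * b <= 3/2 * (a*a)) by nra.
    assert (a + b <= 5/2 * a) by nra.
    assert (a * b * (a + b) <= (3/2*(a*a)) * (5/2*a)).
    { apply Rmult_le_compat; nra. }
    nra. }
  lra.
Qed.

Lemma telescope (u : nat -> R) : is_lim_seq u 0 -> is_series (fun k => u k - u (S k)) (u 0%nat).
Proof.
  intro Hu.
  assert (E : forall N, sum_n (fun k => u k - u (S k)) N = u 0%nat - u (S N)).
  { induction N. rewrite sum_O. reflexivity. rewrite sum_Sn, IHN. unfold plus; simpl. ring. }
  change (is_lim_seq (sum_n (fun k => u k - u (S k))) (u 0%nat)).
  apply (is_lim_seq_ext (fun N => u 0%nat - u (S N))). intros; rewrite E; auto.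
  assert (L : is_lim_seq (fun N => u 0%nat - u (S N)) (u 0%nat - 0)).
  { apply is_lim_seq_minus'. apply is_lim_seq_const. apply (is_lim_seq_incr_1 u 0). auto. }
  rewrite Rminus_0_r in L. exact L.
Qed.

Lemma ex_B : ex_series (fun k => Bn (S k)).
Proof.
  apply (@ex_series_le R_AbsRing R_CompleteNormedModule _ (fun k => 100 * (/ sqrt (INR (S k)) - / sqrt (INR (S (S k)))))).
  - intro k. rewrite normR. assert (0 <= Bn (S k)).
    { unfold Bn. apply Rmult_le_pos. apply pow2_ge_0. apply Rlt_le, Rinv_0_lt_compat, pow_lt, lt_0_INR; lia. }
    rewrite Rabs_pos_eq by auto. apply B_le. lia.
  - apply (@ex_series_scal_l R_AbsRing R_NormedModule 100 (fun k => (/ sqrt (INR (S k)) - / sqrt (INR (S (S k)))))).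
    eexists. apply (telescope (fun k => / sqrt (INR (S k)))).
    apply (is_lim_seq_incr_1 (fun n => / sqrt (INR n))). apply lim_inv_sqrt.
Qed.

Lemma alt_partial N : Rabs (sum_n (fun k => (-1) ^ k) N) <= 1.
Proof.
  assert (E : forall N, sum_n (fun k => (-1) ^ k) N = (1 + (-1) ^ N) / 2).
  { induction N0. rewrite sum_O. simpl. field. rewrite sum_Sn, IHN0. unfold plus; simpl. field. }
  rewrite E. pose proof (pow_1_abs N) as H. apply Rabs_le.
  destruct (Rabs_le_between' ((-1)^N) 0 1) as [H1 _]. 
  revert H; intro H. 
  assert (-1 <= (-1)^N <= 1).
  { split; [|rewrite <- H; apply Rle_abs]. 
    assert (- (-1)^N <= 1) by (rewrite <- H, <- Rabs_Ropp; apply Rle_abs). lra. }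
  lra.
Qed.

Section Alt.
Variables p1 p2 : nat.
Hypothesis hp1 : (1 <= p1)%nat.
Hypothesis hp2 : (1 <= p2)%nat.

Definition alpha (k : nat) : R := harm p1 (S k) * harm p2 (S k) / INR (S k).

Lemma alpha_lim : is_lim_seq alpha 0.
Proof.
  apply (is_lim_seq_le_le (fun _ => 0) _ (fun k => 16 * / sqrt (INR (S k)))).
  - intro k. unfold alpha.
    assert (hn1 : 1 <= INR (S k)) by (apply (le_INR 1); lia).
    set (N := INR (S k)) in *.
    pose proof (harm_le1 p1 (S k) hp1). pose proof (harm_le1 p2 (S k) hp2).
    pose proof (harm_nonneg p1 (S k)). pose proof (harm_nonneg p2 (S k)).
    pose proof (H_bound (S k)). fold N in H3.
    set (a := sqrt N).
    assert (ha2 : a * a = N) by (apply sqrt_sqrt; lra).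
    assert (ha1 : 1 <= a) by (unfold a; rewrite <- sqrt_1; apply sqrt_le_1_alt; lra).
    assert (hs : sqrt (sqrt N) * sqrt (sqrt N) = a) by (apply sqrt_sqrt, sqrt_pos).
    assert (hs0 : 0 <= sqrt (sqrt N)) by apply sqrt_pos.
    assert (hH : harm 1 (S k) * harm 1 (S k) <= 16 * a) by nra.
    assert (hP : harm p1 (S k) * harm p2 (S k) <= 16 * a) by nra.
    split.
    + apply Rmult_le_pos. nra. apply Rlt_le, Rinv_0_lt_compat. lra.
    + rewrite <- ha2. apply (Rle_trans _ (16 * a / (a * a))).
      * apply Rmult_le_compat_r; auto. apply Rlt_le, Rinv_0_lt_compat. nra.
      * right. field. lra.
  - apply is_lim_seq_const.
  - replace (Finite 0) with (Rbar_mult 16 0) by (simpl; f_equal; ring).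
    apply is_lim_seq_scal_l. apply (is_lim_seq_incr_1 (fun n => / sqrt (INR n))). apply lim_inv_sqrt.
Qed.

Lemma alpha_diff k : Rabs (alpha (S k) - alpha k) <= Bn (S k).
Proof.
  unfold alpha, Bn.
  rewrite (harm_S p1 (S k)), (harm_S p2 (S k)).
  assert (hn1 : 1 <= INR (S k)) by (apply (le_INR 1); lia).
  assert (eN : INR (S (S k)) = INR (S k) + 1) by (rewrite S_INR; auto).
  rewrite eN.
  set (N := INR (S k)) in *.
  set (x := / (N + 1) ^ p1). set (y := / (N + 1) ^ p2).
  set (h1 := harm p1 (S k)). set (h2 := harm p2 (S k)). set (H := harm 1 (S k)).
  set (u := / N). set (v := / (N + 1)).
  assert (hu : 0 < u <= 1). { unfold u. split. apply Rinv_0_lt_compat; lra. rewrite <- Rinv_1. apply Rinv_le_contravar; lra. }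
  assert (hv : 0 < v <= u). { unfold u, v. split. apply Rinv_0_lt_compat; lra. apply Rinv_le_contravar; lra. }
  assert (hx : 0 <= x <= v).
  { unfold x, v. split. apply Rlt_le, Rinv_0_lt_compat, pow_lt; lra.
    apply Rinv_le_contravar. lra. rewrite <- (pow_1 (N+1)) at 1. apply Rle_pow; auto; lra. }
  assert (hy : 0 <= y <= v).
  { unfold y, v. split. apply Rlt_le, Rinv_0_lt_compat, pow_lt; lra.
    apply Rinv_le_contravar. lra. rewrite <- (pow_1 (N+1)) at 1. apply Rle_pow; auto; lra. }
  assert (h1b : 0 <= h1 <= H) by (split; [apply harm_nonneg | apply harm_le1; auto]).
  assert (h2b : 0 <= h2 <= H) by (split; [apply harm_nonneg | apply harm_le1; auto]).
  assert (E : (h1 + x) * (h2 + y) / (N + 1) - h1 * h2 / N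
              = (h1 * y + h2 * x + x * y) * v - h1 * h2 * u * v).
  { unfold u, v. field. lra. }
  rewrite E.
  replace ((1 + H) ^ 2 / N ^ 2) with ((1 + H) ^ 2 * (u * u)) by (unfold u; field; lra).
  assert (A1 : 0 <= h1 * h2 * u * v <= H * H * (u * u)).
  { split. repeat apply Rmult_le_pos; lra.
    replace (h1 * h2 * u * v) with ((h1 * h2) * (u * v)) by ring.
    apply Rmult_le_compat. nra. nra. apply Rmult_le_compat; lra. apply Rmult_le_compat_l; lra. }
  assert (A2 : 0 <= (h1 * y + h2 * x + x * y) * v <= (2 * H + 1) * (u * u)).
  { split. apply Rmult_le_pos; [|lra]. assert (0 <= h1 * y) by nra. assert (0 <= h2*x) by nra. nra.
    assert (h1 * y <= H * u) by (apply Rmult_le_compat; lra).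
    assert (h2 * x <= H * u) by (apply Rmult_le_compat; lra).
    assert (x * y <= u * 1) by (apply Rmult_le_compat; lra).
    assert (h1 * y + h2 * x + x * y <= (2 * H + 1) * u) by lra.
    replace ((2 * H + 1) * (u * u)) with (((2 * H + 1) * u) * u) by ring.
    apply Rmult_le_compat; try lra. assert (0 <= h1 * y) by nra. assert (0 <= h2*x) by nra. nra. }
  apply Rabs_le. assert (0 <= H) by lra. nra.
Qed.

Lemma alpha_series : ex_series (fun k => (-1) ^ k * alpha k).
Proof.
  apply (ex_series_ext (fun n => scal (alpha n) ((-1) ^ n))).
  { intro n. unfold scal; simpl. unfold mult; simpl. ring. }
  apply partial_summation_R.
  - exists 1. intro n. rewrite normR. apply alt_partial.
  - apply alpha_lim.
  - apply (@ex_series_le R_AbsRing R_CompleteNormedModule _ (fun k => Bn (S k))).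
    + intro n. rewrite normR, Rabs_pos_eq by apply Rabs_pos. apply alpha_diff.
    + apply ex_B.
Qed.
End Alt.

Lemma S5_bound q m j n : (1 <= n)%nat ->
  harm q n * INR n ^ 2 <= (1 + harm 1 n) ^ 2 * (INR n ^ m * INR (n + j)) ->
  Rabs (S5_term q m 1 j n) <= Bn n.
Proof.
  intros Hn Hle. unfold S5_term, Bn.
  assert (hN : 1 <= INR n) by (apply (le_INR 1); auto).
  assert (hD : 0 < INR n ^ m * INR (n + j)).
  { apply Rmult_lt_0_compat. apply pow_lt; lra. apply lt_0_INR; lia. }
  rewrite pow_1.
  unfold Rdiv. rewrite Rmult_assoc, Rabs_mult, pow_1_abs, Rmult_1_l.
  rewrite Rabs_pos_eq.
  2:{ apply Rmult_le_pos. apply harm_nonneg. apply Rlt_le, Rinv_0_lt_compat; auto. }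
  assert (hn2 : 0 < INR n ^ 2) by (apply pow_lt; lra).
  assert (hnm : 0 < INR n ^ m) by (apply pow_lt; lra).
  assert (hnj : 0 < INR (n + j)) by (apply lt_0_INR; lia).
  replace (harm q n * / (INR n ^ m * INR (n + j))) with
    ((harm q n * INR n ^ 2) * / (INR n ^ m * INR (n + j) * INR n ^ 2)) by (field; repeat split; lra).
  replace ((1 + harm 1 n) ^ 2 * / INR n ^ 2) with
    (((1 + harm 1 n) ^ 2 * (INR n ^ m * INR (n + j))) * / (INR n ^ m * INR (n + j) * INR n ^ 2)) by (field; repeat split; lra).
  apply Rmult_le_compat_r; auto. apply Rlt_le, Rinv_0_lt_compat. nra.
Qed.

Lemma S5_conv q m j : ((1 <= q)%nat /\ (1 <= m)%nat) \/ (q = 0%nat /\ (2 <= m)%nat) ->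
  ex_series (fun k => S5_term q m 1 j (S k)).
Proof.
  intro Hc.
  apply (@ex_series_le R_AbsRing R_CompleteNormedModule _ (fun k => Bn (S k))); [|apply ex_B].
  intro k. rewrite normR. apply S5_bound; [lia|].
  assert (hN : 1 <= INR (S k)) by (apply (le_INR 1); lia).
  set (N := INR (S k)) in *.
  assert (hNj : N <= INR (S k + j)) by (apply le_INR; lia).
  pose proof (harm_nonneg 1 (S k)) as H0.
  destruct Hc as [[Hq Hm] | [Hq Hm]].
  - pose proof (harm_le1 q (S k) Hq). pose proof (harm_nonneg q (S k)).
    assert (N <= N ^ m) by (rewrite <- (pow_1 N) at 1; apply Rle_pow; auto).
    assert (N * N <= N ^ m * INR (S k + j)) by (apply Rmult_le_compat; lra).
    assert (harm q (S k) <= (1 + harm 1 (S k)) ^ 2) by nra.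
    simpl pow at 1. rewrite Rmult_1_r.
    apply Rmult_le_compat; try nra.
  - subst q. rewrite harm0. fold N.
    assert (N ^ 2 <= N ^ m) by (apply Rle_pow; auto).
    assert (N * N ^ 2 <= N ^ m * INR (S k + j)) by (rewrite Rmult_comm; apply Rmult_le_compat; try lra; try (apply pow_le; lra)).
    assert (1 <= (1 + harm 1 (S k)) ^ 2) by nra.
    rewrite <- (Rmult_1_l (N * N ^ 2)).
    apply Rmult_le_compat; try nra; apply Rmult_le_pos; try lra; apply pow_le; lra.
Qed.

Lemma T_term_0 p1 p2 r : T_term p1 p2 r 0 = 0.
Proof. unfold T_term. simpl harm. unfold Rdiv. ring. Qed.

Lemma T_rec p1 p2 r n :
  T_term p1 p2 (S r) n = - T_term p1 p2 r (S n) + S5_term p1 p2 1 r (S n)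
     + S5_term p2 p1 1 r (S n) - S5_term 0 (p1 + p2 + 1) 1 r (S n).
Proof.
  unfold T_term, S5_term. rewrite harm0, !harm_S.
  replace ((-1) ^ (S n + 1)) with (- (-1) ^ (n + 1)) by (simpl; ring).
  replace (n + S r)%nat with (S n + r)%nat by lia.
  assert (hM : 1 <= INR (S n)) by (apply (le_INR 1); lia).
  assert (hR : 0 < INR (S n + r)) by (apply lt_0_INR; lia).
  rewrite !pow_add. rewrite !pow_1.
  set (M := INR (S n)) in *.
  assert (h1 : 0 < M ^ p1) by (apply pow_lt; lra).
  assert (h2 : 0 < M ^ p2) by (apply pow_lt; lra).
  field. repeat split; lra.
Qed.

Section Trec.
Variables p1 p2 : nat.
Hypothesis hp1 : (1 <= p1)%nat.
Hypothesis hp2 : (1 <= p2)%nat.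

Definition tt r := fun k => T_term p1 p2 r (S k).
Definition Xr r := S5 p1 p2 1 r + S5 p2 p1 1 r - S5 0 (p1 + p2 + 1) 1 r.

Lemma convA r : ex_series (fun k => S5_term p1 p2 1 r (S k)).
Proof. apply S5_conv; left; lia. Qed.
Lemma convB r : ex_series (fun k => S5_term p2 p1 1 r (S k)).
Proof. apply S5_conv; left; lia. Qed.
Lemma convC r : ex_series (fun k => S5_term 0 (p1 + p2 + 1) 1 r (S k)).
Proof. apply S5_conv; right; lia. Qed.

Lemma T_step r : ex_series (tt r) -> is_series (tt (S r)) (- Series (tt r) + Xr r).
Proof.
  intro He.
  pose proof (Series_correct _ He) as L0.
  pose proof (Series_correct _ (convA r)) as LA.
  pose proof (Series_correct _ (convB r)) as LB.
  pose proof (Series_correct _ (convC r)) as LC.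
  pose proof (is_series_minus _ _ _ _ (is_series_plus _ _ _ _ (is_series_plus _ _ _ _ (is_series_opp _ _ L0) LA) LB) LC) as L.
  assert (Ev : - Series (tt r) + Xr r = plus (plus (plus (opp (Series (tt r)))
     (Series (fun k : nat => S5_term p1 p2 1 r (S k))))
     (Series (fun k : nat => S5_term p2 p1 1 r (S k))))
     (opp (Series (fun k : nat => S5_term 0 (p1 + p2 + 1) 1 r (S k)))))
   by (unfold Xr, S5, sum1, plus, opp; simpl; ring).
  assert (Lf : is_series (fun n => T_term p1 p2 (S r) n) (- Series (tt r) + Xr r)).
  { rewrite Ev. eapply is_series_ext; [|exact L].
    intro n. unfold tt; simpl. rewrite T_rec. unfold plus, opp; simpl. ring. }
  apply (is_series_incr_1 (fun n => T_term p1 p2 (S r) n)).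
  replace (- Series (tt r) + Xr r) with (plus (- Series (tt r) + Xr r) (T_term p1 p2 (S r) 0)) in Lf
    by (rewrite T_term_0; unfold plus; simpl; ring).
  exact Lf.
Qed.

Lemma alt_ext k : T_term p1 p2 0 (S k) = (-1) ^ k * alpha p1 p2 k.
Proof.
  unfold T_term, alpha. rewrite Nat.add_0_r.
  replace ((-1) ^ (S k + 1)) with ((-1) ^ k) by (rewrite pow_add; simpl; ring).
  unfold Rdiv. ring.
Qed.

Lemma T_ex r : ex_series (tt r).
Proof.
  induction r.
  - apply (ex_series_ext (fun k => (-1) ^ k * alpha p1 p2 k)).
    intro k. unfold tt. rewrite alt_ext. auto. apply alpha_series; auto.
  - eexists. apply T_step. auto.
Qed.

Lemma T0 : Series (tt 0) = Sppm p1 p2 1.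
Proof.
  unfold Sppm, sum1. apply Series_ext. intro k. unfold tt, T_term, Sppm_term.
  rewrite Nat.add_0_r. replace (S k - 1)%nat with k by lia.
  replace ((-1) ^ (S k + 1)) with ((-1) ^ k) by (rewrite pow_add; simpl; ring).
  rewrite pow_1. auto.
Qed.

Lemma A0 q m : S5 q m 1 0 = Spm q (m + 1).
Proof.
  unfold S5, Spm, sum1. apply Series_ext. intro k. unfold S5_term, Spm_term.
  rewrite Nat.add_0_r. replace (S k - 1)%nat with k by lia.
  replace ((-1) ^ (S k + 1)) with ((-1) ^ k) by (rewrite pow_add; simpl; ring).
  rewrite pow_add, !pow_1. auto.
Qed.

Lemma C0 s : S5 0 s 1 0 = zetabar s.
Proof.
  unfold S5, zetabar, sum1. apply Series_ext. intro k. unfold S5_term, zetabar_term.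
  rewrite Nat.add_0_r, harm0. replace (S k - 1)%nat with k by lia.
  replace ((-1) ^ (S k + 1)) with ((-1) ^ k) by (rewrite pow_add; simpl; ring).
  rewrite pow_1.
  assert (0 < INR (S k)) by (apply lt_0_INR; lia).
  assert (0 < INR (S k) ^ s) by (apply pow_lt; lra).
  field. lra.
Qed.
End Trec.

Lemma fsum_from_S a l g : fsum_from a (S l) g = fsum_from a l g + g (a + l)%nat.
Proof.
  revert a. induction l; intro a; simpl.
  - rewrite Nat.add_0_r. ring.
  - simpl in IHl. rewrite IHl. replace (S a + l)%nat with (a + S l)%nat by lia. ring.
Qed.

Lemma fsum_from_ext a l f g : (forall j, (a <= j < a + l)%nat -> f j = g j) ->
  fsum_from a l f = fsum_from a l g.
Proof.
  revert a. induction l; intros a H; simpl; auto.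
  rewrite (H a) by lia. rewrite (IHl (S a)); auto. intros; apply H; lia.
Qed.

Lemma fsum_from_scal a l c f : fsum_from a l (fun j => c * f j) = c * fsum_from a l f.
Proof. revert a. induction l; intro a; simpl. ring. rewrite IHl. ring. Qed.

Lemma closed_form p1 p2 m : (1 <= p1)%nat -> (1 <= p2)%nat ->
  Series (tt p1 p2 (S m)) =
  (-1) ^ (S m) * (Sppm p1 p2 1 - Spm p1 (p2 + 1) - Spm p2 (p1 + 1) + zetabar (p1 + p2 + 1))
  + fsum_from 1 m (fun j => (-1) ^ (S m - 1 - j) * (S5 p1 p2 1 j + S5 p2 p1 1 j))
  + fsum_from 1 m (fun j => (-1) ^ (S m - j) * S5 0 (p1 + p2 + 1) 1 j).
Proof.
  intros hp1 hp2.
  assert (Rec : forall r, Series (tt p1 p2 (S r)) = - Series (tt p1 p2 r) + Xr p1 p2 r).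
  { intro r. apply is_series_unique. apply T_step; auto. apply T_ex; auto. }
  induction m.
  - rewrite Rec. unfold Xr. rewrite (T0 p1 p2 hp1 hp2), (A0 p1 p2 hp1 hp2 p1 p2), (A0 p1 p2 hp1 hp2 p2 p1), (C0 p1 p2 hp1 hp2). simpl fsum_from. ring.
  - rewrite Rec, IHm. unfold Xr.
    rewrite !fsum_from_S.
    rewrite (fsum_from_ext 1 m (fun j => (-1) ^ (S (S m) - 1 - j) * (S5 p1 p2 1 j + S5 p2 p1 1 j))
               (fun j => (-1) * ((-1) ^ (S m - 1 - j) * (S5 p1 p2 1 j + S5 p2 p1 1 j)))).
    2:{ intros j Hj. replace (S (S m) - 1 - j)%nat with (S (S m - 1 - j)) by lia. simpl. ring. }
    rewrite (fsum_from_ext 1 m (fun j => (-1) ^ (S (S m) - j) * S5 0 (p1 + p2 + 1) 1 j)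
               (fun j => (-1) * ((-1) ^ (S m - j) * S5 0 (p1 + p2 + 1) 1 j))).
    2:{ intros j Hj. replace (S (S m) - j)%nat with (S (S m - j)) by lia. simpl. ring. }
    rewrite !fsum_from_scal.
    replace (S (S m) - 1 - (1 + m))%nat with 0%nat by lia.
    replace (S (S m) - (1 + m))%nat with 1%nat by lia.
    replace (1 + m)%nat with (S m) by lia.
    simpl pow. ring.
Qed.

Theorem lemma9 (p1 p2 r : nat) (hp1 : (1 <= p1)%nat) (hp2 : (1 <= p2)%nat)
  (hr : (1 <= r)%nat) :
  conv1 (Sppm_term p1 p2 1) /\ conv1 (Spm_term p1 (p2 + 1)) /\
  conv1 (Spm_term p2 (p1 + 1)) /\ conv1 (zetabar_term (p1 + p2 + 1)) /\
  (forall j : nat, (1 <= j <= r - 1)%nat ->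
     conv1 (S5_term p1 p2 1 j) /\ conv1 (S5_term p2 p1 1 j) /\
     conv1 (S5_term 0 (p1 + p2 + 1) 1 j)) /\
  is_series (fun k => T_term p1 p2 r (S k))
    ((-1) ^ r * (Sppm p1 p2 1 - Spm p1 (p2 + 1) - Spm p2 (p1 + 1)
                 + zetabar (p1 + p2 + 1))
     + fsum 1 (r - 1) (fun j => (-1) ^ (r - 1 - j) * (S5 p1 p2 1 j + S5 p2 p1 1 j))
     + fsum 1 (r - 1) (fun j => (-1) ^ (r - j) * S5 0 (p1 + p2 + 1) 1 j)).
Proof.
  split; [|split; [|split; [|split; [|split]]]].
  - unfold conv1. apply (ex_series_ext (tt p1 p2 0)); [|apply T_ex; auto].
    intro k. unfold tt, T_term, Sppm_term.
    rewrite Nat.add_0_r. replace (S k - 1)%nat with k by lia.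
    replace ((-1) ^ (S k + 1)) with ((-1) ^ k) by (rewrite pow_add; simpl; ring).
    rewrite pow_1. auto.
  - unfold conv1. apply (ex_series_ext (fun k => S5_term p1 p2 1 0 (S k))); [|apply convA; auto].
    intro k. unfold S5_term, Spm_term.
    rewrite Nat.add_0_r. replace (S k - 1)%nat with k by lia.
    replace ((-1) ^ (S k + 1)) with ((-1) ^ k) by (rewrite pow_add; simpl; ring).
    rewrite pow_add, !pow_1. auto.
  - unfold conv1. apply (ex_series_ext (fun k => S5_term p2 p1 1 0 (S k))); [|apply convB; auto].
    intro k. unfold S5_term, Spm_term.
    rewrite Nat.add_0_r. replace (S k - 1)%nat with k by lia.
    replace ((-1) ^ (S k + 1)) with ((-1) ^ k) by (rewrite pow_add; simpl; ring).
    rewrite pow_add, !pow_1. auto.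
  - unfold conv1. apply (ex_series_ext (fun k => S5_term 0 (p1 + p2 + 1) 1 0 (S k))); [|apply convC; auto].
    intro k. unfold S5_term, zetabar_term.
    rewrite Nat.add_0_r, harm0. replace (S k - 1)%nat with k by lia.
    replace ((-1) ^ (S k + 1)) with ((-1) ^ k) by (rewrite pow_add; simpl; ring).
    rewrite pow_1.
    assert (0 < INR (S k)) by (apply lt_0_INR; lia).
    assert (0 < INR (S k) ^ (p1 + p2 + 1)) by (apply pow_lt; lra).
    assert (E : forall a N X : R, 0 < N -> 0 < X -> a * N / (X * N) = a / X) by (intros; field; lra). apply E; auto.
  - intros j _. split; [|split]; unfold conv1.
    + apply convA; auto. + apply convB; auto. + apply convC; auto.
  - destruct r as [|m]; [lia|].
    unfold fsum. replace (S (S m - 1) - 1)%nat with m by lia.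
    rewrite <- closed_form by auto.
    apply Series_correct. apply (T_ex p1 p2 hp1 hp2 (S m)).
Qed.
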